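(* Let $R$ be a commutative ring. There exists an $R$-linear equivalence of categories between $\mathrm{Rel}_R$ and $\mathrm{Rel}_R(\varkappa)$.
   Context: $R$ is a commutative unital ring. For $R$-modules $L,M$, an $R$-linear relation from $L$ to $M$ is an $R$-submodule of $L\oplus M$; a relation on $M$ is one from $M$ to $M$. The category $\mathrm{Rel}_R$ has objects pairs $(M,C)$ with $M$ an $R$-module and $C$ an $R$-linear relation on $M$; morphisms $(L,B)\to(M,C)$ are the $R$-linear maps $f\colon L\to M$ such that $(f(x),f(y))\in C$ for all $(x,y)\in B$, with composition of maps and identity maps. $\mathrm{Rep}_R(\varkappa)$ is the category of representations of the Kronecker quiver (two arrows $a,b\colon t\to h$): objects $(M_t,M_h;\mu_a,\mu_b)$ with $\mu_a,\mu_b\in\mathrm{Hom}_R(M_t,M_h)$, morphisms pairs $(f_t,f_h)$ of $R$-linear maps with $f_h\mu_c=\mu'_c f_t$ for $c=a,b$. $\mathrm{Rel}_R(\varkappa)$ is its full subcategory of objects with $\ker(\mu_a)\cap\ker(\mu_b)=0$. *)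

(* Defs.v *)
From HB Require Import structures.
From mathcomp Require Import all_boot all_algebra.
Set Implicit Arguments. Unset Strict Implicit. Unset Printing Implicit Defensive.
Import GRing.Theory.
Local Open Scope ring_scope.

Section RelCategories.
Variable R : comPzRingType.

Definition linmap (L M : lmodType R) (f : L -> M) : Prop :=
  forall (a : R) (x y : L), f (a *: x + y) = a *: f x + f y.

(* An R-linear relation on M: an R-submodule of M (+) M, given as a
   predicate on pairs closed under 0 and R-linear combinations. *)
Definition is_linrel (M : lmodType R) (C : M -> M -> Prop) : Prop :=
  C 0 0 /\ forall (a : R) (x y x' y' : M),
    C x y -> C x' y' -> C (a *: x + x') (a *: y + y').

Record relobj := RelObj {
  rmod : lmodType R;
  rrel : rmod -> rmod -> Prop;
  rrel_linrel : is_linrel rrel }.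
Arguments rrel : clear implicits.

Definition relhom (X Y : relobj) (f : rmod X -> rmod Y) : Prop :=
  linmap f /\ forall x y, rrel X x y -> rrel Y (f x) (f y).
Definition RelHom (X Y : relobj) := {f : rmod X -> rmod Y | relhom f}.
Definition relhom_eq (X Y : relobj) (f g : RelHom X Y) : Prop :=
  forall x, sval f x = sval g x.

(* Objects of Rep_R(kappa): representations of the Kronecker quiver *)
Record krep := KRep {
  kt : lmodType R;
  kh : lmodType R;
  ka : kt -> kh;
  kb : kt -> kh;
  ka_lin : linmap ka;
  kb_lin : linmap kb }.
Arguments ka : clear implicits.
Arguments kb : clear implicits.

Definition krel (X : krep) : Prop :=
  forall x : kt X, ka X x = 0 -> kb X x = 0 -> x = 0.

Definition krephom (X Y : krep) (ft : kt X -> kt Y) (fh : kh X -> kh Y) : Prop :=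
  [/\ linmap ft, linmap fh,
      (forall x, fh (ka X x) = ka Y (ft x)) &
      (forall x, fh (kb X x) = kb Y (ft x))].
Definition KHom (X Y : krep) :=
  {p : (kt X -> kt Y) * (kh X -> kh Y) | krephom p.1 p.2}.
Definition khom_t (X Y : krep) (p : KHom X Y) : kt X -> kt Y := (sval p).1.
Definition khom_h (X Y : krep) (p : KHom X Y) : kh X -> kh Y := (sval p).2.
Definition khom_eq (X Y : krep) (p q : KHom X Y) : Prop :=
  (forall x, khom_t p x = khom_t q x) /\ (forall x, khom_h p x = khom_h q x).

(* An R-linear functor Rel_R -> Rel_R(kappa).  Morphisms are compared
   pointwise; identities, composites and R-linear combinations are
   expressed by pointwise equations on the underlying maps. *)
Record relfunctor := RelFunctor {
  Fob : relobj -> krep;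
  Fob_rel : forall X, krel (Fob X);
  Fhom : forall X Y : relobj, RelHom X Y -> KHom (Fob X) (Fob Y);
  Fhom_ext : forall X Y (f g : RelHom X Y),
    relhom_eq f g -> khom_eq (Fhom f) (Fhom g);
  Fhom_id : forall X (f : RelHom X X), (forall x, sval f x = x) ->
    (forall x, khom_t (Fhom f) x = x) /\ (forall x, khom_h (Fhom f) x = x);
  Fhom_comp : forall X Y Z (f : RelHom X Y) (g : RelHom Y Z) (h : RelHom X Z),
    (forall x, sval h x = sval g (sval f x)) ->
    (forall x, khom_t (Fhom h) x = khom_t (Fhom g) (khom_t (Fhom f) x)) /\
    (forall x, khom_h (Fhom h) x = khom_h (Fhom g) (khom_h (Fhom f) x));
  Fhom_linear : forall X Y (r : R) (f g h : RelHom X Y),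
    (forall x, sval h x = r *: sval f x + sval g x) ->
    (forall x, khom_t (Fhom h) x = r *: khom_t (Fhom f) x + khom_t (Fhom g) x) /\
    (forall x, khom_h (Fhom h) x = r *: khom_h (Fhom f) x + khom_h (Fhom g) x) }.

Definition faithful_functor (F : relfunctor) : Prop :=
  forall X Y (f g : RelHom X Y), khom_eq (Fhom F f) (Fhom F g) -> relhom_eq f g.
Definition full_functor (F : relfunctor) : Prop :=
  forall X Y (k : KHom (Fob F X) (Fob F Y)), exists f : RelHom X Y,
    khom_eq (Fhom F f) k.
Definition krep_iso (X Y : krep) : Prop :=
  exists (u : KHom X Y) (v : KHom Y X),
    (forall x, khom_t v (khom_t u x) = x) /\ (forall x, khom_h v (khom_h u x) = x) /\
    (forall y, khom_t u (khom_t v y) = y) /\ (forall y, khom_h u (khom_h v y) = y).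
Definition ess_surj (F : relfunctor) : Prop :=
  forall Y : krep, krel Y -> exists X : relobj, krep_iso (Fob F X) Y.
Definition equivalence (F : relfunctor) : Prop :=
  [/\ faithful_functor F, full_functor F & ess_surj F].

End RelCategories.

(* Main.v *)
Require Import Defs.
From mathcomp Require Import all_boot all_algebra.
From HB Require Import structures.
From Stdlib Require Import ClassicalEpsilon.
Set Implicit Arguments. Unset Strict Implicit. Unset Printing Implicit Defensive.
Import GRing.Theory.
Local Open Scope ring_scope.

Definition pdec (P : Prop) : bool :=
  if excluded_middle_informative P then true else false.
Lemma pdecP (P : Prop) : reflect P (pdec P).
Proof. rewrite /pdec; case: excluded_middle_informative => h; constructor; done. Qed.

Section Constr.
Variable R : comPzRingType.

Lemma linmap0 (L M : lmodType R) (f : L -> M) : linmap f -> f 0 = 0.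
Proof.
move=> h; have := h 1 0 0; rewrite !scale1r addr0 => e.
by rewrite -[in LHS](addrK (f 0) (f 0)) -e subrr.
Qed.

Lemma linmapB (L M : lmodType R) (f : L -> M) : linmap f -> forall x y, f (x - y) = f x - f y.
Proof.
move=> h x y; have := h (-1) y x.
by rewrite scaleN1r addrC => ->; rewrite scaleN1r addrC.
Qed.

Section Sub.
Variable X : relobj R.
Definition relpred : pred (rmod X * rmod X) := fun p => pdec (@rrel _ X p.1 p.2).

Lemma relpred_closed : subsemimod_closed relpred.
Proof.
have [h0 hl] := rrel_linrel X.
split; first split.
- by apply/pdecP.
- move=> [x y] [x' y'] /pdecP /= hx /pdecP /= hy; apply/pdecP => /=.
  by have := hl 1 _ _ _ _ hx hy; rewrite !scale1r.
- move=> a [x y] /pdecP /= hx; apply/pdecP => /=.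
  by have := hl a _ _ _ _ hx h0; rewrite !addr0.
Qed.

HB.instance Definition _ := GRing.isSubmodClosed.Build R _ relpred relpred_closed.

Record relsub := RelSub { rsval : rmod X * rmod X; _ : relpred rsval }.
HB.instance Definition _ := [isSub for rsval].
HB.instance Definition _ := [Choice of relsub by <:].
HB.instance Definition _ := [SubChoice_isSubLmodule of relsub by <:].

Definition rp1 (c : relsub) : rmod X := (val c).1.
Definition rp2 (c : relsub) : rmod X := (val c).2.
Lemma rp1_lin : linmap rp1. Proof. by move=> a x y; rewrite /rp1 raddfD linearZ. Qed.
Lemma rp2_lin : linmap rp2. Proof. by move=> a x y; rewrite /rp2 raddfD linearZ. Qed.

Definition FobX : krep R := @KRep R relsub (rmod X) rp1 rp2 rp1_lin rp2_lin.
Lemma FobX_rel : krel FobX.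
Proof.
move=> c /= h1 h2; apply: val_inj; rewrite [RHS]raddf0.
by rewrite [val c]surjective_pairing -/(rp1 c) -/(rp2 c) h1 h2.
Qed.
End Sub.

Section Hom.
Variables X Y : relobj R.

Lemma relsubP (Z : relobj R) (c : relsub Z) : @rrel _ Z (rp1 c) (rp2 c).
Proof. case: c => [[x y]] h; exact/pdecP. Qed.

Lemma rp_eq (Z : relobj R) (c d : relsub Z) : rp1 c = rp1 d -> rp2 c = rp2 d -> c = d.
Proof.
move=> h1 h2; apply: val_inj.
by rewrite [val c]surjective_pairing [val d]surjective_pairing -/(rp1 c) -/(rp2 c) h1 h2.
Qed.

Definition ftmap (f : rmod X -> rmod Y) (hf : relhom f) (c : relsub X) : relsub Y :=
  @RelSub Y (f (rp1 c), f (rp2 c)) (introT (pdecP _) (proj2 hf _ _ (relsubP c))).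

Lemma rp1_ftmap f hf c : rp1 (@ftmap f hf c) = f (rp1 c). Proof. by []. Qed.
Lemma rp2_ftmap f hf c : rp2 (@ftmap f hf c) = f (rp2 c). Proof. by []. Qed.

Lemma ftmap_lin f hf : linmap (@ftmap f hf).
Proof.
move=> a x y; apply: rp_eq.
- by rewrite [RHS]rp1_lin !rp1_ftmap rp1_lin (proj1 hf).
- by rewrite [RHS]rp2_lin !rp2_ftmap rp2_lin (proj1 hf).
Qed.
End Hom.

Definition Fmap (X Y : relobj R) (f : RelHom X Y) : KHom (FobX X) (FobX Y).
Proof.
refine (exist _ (@ftmap X Y (sval f) (svalP f), sval f) _).
split => //=; [exact: ftmap_lin | exact: (proj1 (svalP f))].
Defined.

Lemma Fmap_t (X Y : relobj R) (f : RelHom X Y) x :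
  khom_t (Fmap f) x = @ftmap X Y (sval f) (svalP f) x.
Proof. by []. Qed.

Definition TheF : relfunctor R.
Proof.
refine (@RelFunctor R FobX FobX_rel Fmap _ _ _ _).
- move=> X Y f g e; split => x /=; last exact: e.
  rewrite ?Fmap_t.
  by apply: rp_eq; rewrite ?rp1_ftmap ?rp2_ftmap ?e.
- move=> X f e; split => x /=; last exact: e.
  rewrite ?Fmap_t.
  by apply: rp_eq; rewrite ?rp1_ftmap ?rp2_ftmap ?e.
- move=> X Y Z f g h e; split => x /=; last exact: e.
  rewrite ?Fmap_t.
  by apply: rp_eq; rewrite ?rp1_ftmap ?rp2_ftmap ?e.
- move=> X Y r f g h e; split => x /=; last exact: e.
  rewrite ?Fmap_t.
  apply: rp_eq.
  + by rewrite [RHS]rp1_lin !rp1_ftmap e.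
  + by rewrite [RHS]rp2_lin !rp2_ftmap e.
Defined.

Lemma TheF_faithful : faithful_functor TheF.
Proof. by move=> X Y f g [_ e]. Qed.

Lemma TheF_full : full_functor TheF.
Proof.
move=> X Y [[ft fh] [lt lh ca cb]] /=.
have hf : relhom fh.
  split => // x y hxy.
  pose c := @RelSub X (x, y) (introT (pdecP _) hxy).
  have := ca c; have := cb c; rewrite /= => e2 e1.
  have := relsubP (ft c).
  by rewrite /= -e1 -e2.
exists (exist _ fh hf); split => x //=.
apply: rp_eq; rewrite ?rp1_ftmap ?rp2_ftmap /=.
- exact: ca.
- exact: cb.
Qed.

Section Ess.
Variable Y : krep R.
Hypothesis hY : krel Y.

Definition erel (u v : kh Y) : Prop := exists x, u = @ka _ Y x /\ v = @kb _ Y x.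
Lemma erel_lin : is_linrel erel.
Proof.
split.
- by exists 0; rewrite (linmap0 (@ka_lin _ Y)) (linmap0 (@kb_lin _ Y)).
- move=> a x y x' y' [z [-> ->]] [z' [-> ->]]; exists (a *: z + z').
  by rewrite (@ka_lin _ Y) (@kb_lin _ Y).
Qed.
Definition EX : relobj R := @RelObj R (kh Y) erel erel_lin.

Lemma kinj x x' : @ka _ Y x = @ka _ Y x' -> @kb _ Y x = @kb _ Y x' -> x = x'.
Proof.
move=> h1 h2; apply/eqP; rewrite -subr_eq0; apply/eqP; apply: hY.
- by rewrite (linmapB (@ka_lin _ Y)) h1 subrr.
- by rewrite (linmapB (@kb_lin _ Y)) h2 subrr.
Qed.

Definition ut (c : relsub EX) : kt Y :=
  proj1_sig (constructive_indefinite_description _ (relsubP c)).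
Lemma ut_spec c : rp1 c = @ka _ Y (ut c) /\ rp2 c = @kb _ Y (ut c).
Proof. rewrite /ut; case: constructive_indefinite_description => //. Qed.

Lemma ut_lin : linmap ut.
Proof.
move=> a c d; apply: kinj.
- rewrite [RHS](@ka_lin _ Y) -!(proj1 (ut_spec _)); exact: (@rp1_lin EX).
- rewrite [RHS](@kb_lin _ Y) -!(proj2 (ut_spec _)); exact: (@rp2_lin EX).
Qed.

Definition uK : KHom (FobX EX) Y.
Proof.
refine (exist _ (ut, id) _); split.
- exact: ut_lin.
- by [].
- move=> c; exact: (proj1 (ut_spec c)).
- move=> c; exact: (proj2 (ut_spec c)).
Defined.

Definition vt (x : kt Y) : relsub EX :=
  @RelSub EX (@ka _ Y x, @kb _ Y x) (introT (pdecP _) (ex_intro _ x (conj erefl erefl))).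

Lemma vt_lin : linmap vt.
Proof.
move=> a x y; apply: rp_eq.
- by rewrite [RHS]rp1_lin /= /rp1 /= (@ka_lin _ Y).
- by rewrite [RHS]rp2_lin /= /rp2 /= (@kb_lin _ Y).
Qed.

Definition vK : KHom Y (FobX EX).
Proof.
refine (exist _ (vt, id) _); split => //.
exact: vt_lin.
Defined.

Lemma iso_EX : krep_iso (FobX EX) Y.
Proof.
exists uK, vK; split; [|split; [|split]] => x //=.
- apply: rp_eq; by rewrite /= ?(proj1 (ut_spec x)) ?(proj2 (ut_spec x)).
- by apply: kinj; rewrite -?(proj1 (ut_spec _)) -?(proj2 (ut_spec _)).
Qed.
End Ess.

Lemma TheF_ess : ess_surj TheF.
Proof. move=> Y hY; exists (EX Y); exact: iso_EX. Qed.

End Constr.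

Theorem lemma4p2 (R : comPzRingType) :
  exists F : relfunctor R, equivalence F.
Proof.
exists (TheF R); split; [exact: TheF_faithful | exact: TheF_full | exact: TheF_ess].
Qed.
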